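(* For each $\mathcal{H} \in \mathbb{R}_D^{[2,2]}$ whose Hermitian flattening matrix has the form \[ \mathfrak{m}(\mathcal{H}) = \begin{pmatrix} A & C \\ C & B \end{pmatrix}, \quad A, B, C \in \mathcal{S}^2, \] there exist invertible matrices $P,Q\in \mathbb{R}^{2\times 2}$ such that $\tilde{\mathcal{H}}:=(P,Q)\times_{cong} \mathcal{H}$ has the flattening \[ \mathfrak{m}(\tilde{\mathcal{H}}) = \begin{pmatrix} sI_2 & D \\ D & s\tilde{B} \end{pmatrix} - s \begin{pmatrix} uu^T & 0 \\ 0 & 0 \end{pmatrix}, \] where $s\in \{0,1,-1\}$, $D$ is a real diagonal matrix, $u\in \mathbb{R}^{2}$ and $\tilde{B} \in \mathcal{S}^2$. In particular, $u=0$ if one of $A,B$ is positive (or negative) definite, and $s=0$ if $A=B=0$.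
   Context: For vectors $v_1,v_2\in\mathbb{C}^2$, $[v_1,v_2]_{\otimes_h} := v_1\otimes v_2\otimes \overline{v_1}\otimes\overline{v_2}$. A real Hermitian tensor $\mathcal{H}\in\mathbb{R}^{2\times2\times2\times2}$ (i.e., $\mathcal{H}_{i_1i_2j_1j_2}=\mathcal{H}_{j_1j_2i_1i_2}$, all entries real) is called $\mathbb{R}$-Hermitian decomposable if $\mathcal{H}=\sum_{i=1}^r \lambda_i [u_i^1,u_i^2]_{\otimes_h}$ with real vectors $u_i^j\in\mathbb{R}^2$ and real scalars $\lambda_i$; $\mathbb{R}_D^{[2,2]}$ denotes the subspace of such tensors. $\mathcal{S}^2$ is the set of $2\times 2$ real symmetric matrices, and $I_2$ the $2\times2$ identity. The Hermitian flattening $\mathfrak{m}$ is the linear map sending $[v_1,v_2]_{\otimes_h}$ to the Kronecker product $(v_1v_1^* )\boxtimes(v_2v_2^* )$; equivalently $\mathfrak{m}(\mathcal{H})$ is the $4\times 4$ matrix with entries $(\mathfrak{m}(\mathcal{H}))_{(i_1,i_2),(j_1,j_2)} = \mathcal{H}_{i_1 i_2 j_1 j_2}$ (rows/columns indexed lexicographically). For square matrices $Q_1,Q_2$, the multilinear congruent transformation is $(Q_1,Q_2)\times_{cong}\mathcal{H} := (Q_1,Q_2,\overline{Q_1},\overline{Q_2})\times \mathcal{H}$, where $(M_1,\dots,M_4)\times$ is the multilinear matrix-tensor product, linear and satisfying $(M_1,\dots,M_4)\times(w_1\otimes\cdots\otimes w_4) = (M_1w_1)\otimes\cdots\otimes(M_4w_4)$.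 *)

(* Defs.v *)
From HB Require Import structures.
From mathcomp Require Import all_boot all_order all_algebra.
From mathcomp Require Import reals.
Set Implicit Arguments. Unset Strict Implicit. Unset Printing Implicit Defensive.
Import Order.TTheory GRing.Theory Num.Theory.
Local Open Scope ring_scope.

Definition tensor (R : realType) := 'I_2 -> 'I_2 -> 'I_2 -> 'I_2 -> R.

Definition is_hermitian (R : realType) (H : tensor R) : Prop :=
  forall i1 i2 j1 j2, H i1 i2 j1 j2 = H j1 j2 i1 i2.

(* [v1,v2]_{(x)h} = v1 (x) v2 (x) conj v1 (x) conj v2; for real vectors conj = id. *)
Definition htensor (R : realType) (v1 v2 : 'cV[R]_2) : tensor R :=
  fun a b c d => v1 a 0 * v2 b 0 * v1 c 0 * v2 d 0.

Definition R_hermitian_decomposable (R : realType) (H : tensor R) : Prop :=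
  is_hermitian H /\
  exists (r : nat) (lam : 'I_r -> R) (u1 u2 : 'I_r -> 'cV[R]_2),
    forall a b c d, H a b c d = \sum_(i < r) lam i * htensor (u1 i) (u2 i) a b c d.

Definition hflat (R : realType) (H : tensor R) : 'M[R]_4 :=
  \matrix_(p < 4, q < 4)
    H (inord (p %/ 2)) (inord (p %% 2)) (inord (q %/ 2)) (inord (q %% 2)).

Definition mlprod (R : realType) (M1 M2 M3 M4 : 'M[R]_2) (H : tensor R) : tensor R :=
  fun a b c d => \sum_(i < 2) \sum_(j < 2) \sum_(k < 2) \sum_(l < 2)
     M1 a i * M2 b j * M3 c k * M4 d l * H i j k l.

(* Multilinear congruent transformation (Q1,Q2) x_cong H = (Q1,Q2,conj Q1,conj Q2) x H;
   for real matrices conj Qi = Qi. *)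
Definition cong (R : realType) (Q1 Q2 : 'M[R]_2) (H : tensor R) : tensor R :=
  mlprod Q1 Q2 Q1 Q2 H.

Definition is_sym2 (R : realType) (M : 'M[R]_2) : Prop := M^T = M.

Definition posdef (R : realType) (M : 'M[R]_2) : Prop :=
  is_sym2 M /\ forall x : 'cV[R]_2, x != 0 -> 0 < (x^T *m M *m x) 0 0.

Definition negdef (R : realType) (M : 'M[R]_2) : Prop := posdef (- M).

(* Main.v *)
Require Import Defs.
From HB Require Import structures.
From mathcomp Require Import all_boot all_order all_algebra.
From mathcomp Require Import reals.
From mathcomp Require Import ring lra.
From Stdlib Require Import Classical_Prop.
Import Order.TTheory GRing.Theory Num.Theory.
Local Open Scope ring_scope.
Set Implicit Arguments. Unset Strict Implicit.


Section M2.
Variable R : realType.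
Definition i0 : 'I_2 := ord0.
Definition i1 : 'I_2 := ord_max.

Definition m2 (a b c d : R) : 'M[R]_2 :=
  \matrix_(i < 2, j < 2) if (i : nat) == 0%N then (if (j : nat) == 0%N then a else b)
                      else (if (j : nat) == 0%N then c else d).

Lemma ord2P (i : 'I_2) : i = i0 \/ i = i1.
Proof. case: i => [[|[|n]] Hi]; [left|right|by []]; exact: val_inj. Qed.

Lemma sum2 (f : 'I_2 -> R) : \sum_(i < 2) f i = f i0 + f i1.
Proof. by rewrite big_ord_recr big_ord_recr big_ord0 /= add0r; congr (f _ + f _); apply: val_inj. Qed.

Lemma m2E (M : 'M[R]_2) : M = m2 (M i0 i0) (M i0 i1) (M i1 i0) (M i1 i1).
Proof. apply/matrixP => i j; rewrite mxE; by case: (ord2P i) => ->; case: (ord2P j) => ->. Qed.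

Lemma m2e a b c d : let M := m2 a b c d in
  [/\ M i0 i0 = a, M i0 i1 = b, M i1 i0 = c & M i1 i1 = d].
Proof. by rewrite /= !mxE. Qed.

Lemma mulm2 a b c d e f g h :
  m2 a b c d *m m2 e f g h = m2 (a*e+b*g) (a*f+b*h) (c*e+d*g) (c*f+d*h).
Proof.
apply/matrixP => i j; rewrite !mxE sum2 !mxE.
by case: (ord2P i) => ->; case: (ord2P j) => ->.
Qed.

Lemma trm2 a b c d : (m2 a b c d)^T = m2 a c b d.
Proof. apply/matrixP => i j; rewrite !mxE; by case: (ord2P i) => ->; case: (ord2P j) => ->. Qed.

Lemma addm2 a b c d e f g h : m2 a b c d + m2 e f g h = m2 (a+e) (b+f) (c+g) (d+h).
Proof. apply/matrixP => i j; rewrite !mxE; by case: (ord2P i) => ->; case: (ord2P j) => ->. Qed.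

Lemma scalem2 k a b c d : k *: m2 a b c d = m2 (k*a) (k*b) (k*c) (k*d).
Proof. apply/matrixP => i j; rewrite !mxE; by case: (ord2P i) => ->; case: (ord2P j) => ->. Qed.

Lemma oppm2 a b c d : - m2 a b c d = m2 (-a) (-b) (-c) (-d).
Proof. apply/matrixP => i j; rewrite !mxE; by case: (ord2P i) => ->; case: (ord2P j) => ->. Qed.

Lemma scalarm2 k : k%:M = m2 k 0 0 k :> 'M[R]_2.
Proof. apply/matrixP => i j; rewrite !mxE; by case: (ord2P i) => ->; case: (ord2P j) => ->. Qed.

Lemma zerom2 : 0 = m2 0 0 0 0.
Proof. apply/matrixP => i j; rewrite !mxE; by case: (ord2P i) => ->; case: (ord2P j) => ->. Qed.

Definition c2 (x y : R) : 'cV[R]_2 := \col_(i < 2) if (i : nat) == 0%N then x else y.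

Lemma c2E (u : 'cV[R]_2) : u = c2 (u i0 0) (u i1 0).
Proof. apply/matrixP => i j; rewrite !mxE; rewrite (ord1 j); by case: (ord2P i) => ->. Qed.

Lemma c2c2 x y : c2 x y *m (c2 x y)^T = m2 (x*x) (x*y) (y*x) (y*y).
Proof.
apply/matrixP => i j; rewrite !mxE big_ord1 !mxE.
by case: (ord2P i) => ->; case: (ord2P j) => ->.
Qed.

Lemma diagm2 a b c d : is_diag_mx (m2 a b c d) = (b == 0) && (c == 0).
Proof.
apply/is_diag_mxP/andP => [H|[/eqP Hb /eqP Hc] i j].
  by move: (H i0 i1 isT) (H i1 i0 isT); rewrite !mxE /= => -> ->.
by case: (ord2P i) => ->; case: (ord2P j) => -> //=; rewrite mxE.
Qed.

Lemma m2_unit a b c d : a * d - b * c != 0 -> m2 a b c d \in unitmx.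
Proof.
move=> Hd.
have [] // := @mulmx1_unit _ _ (m2 a b c d) ((a*d-b*c)^-1 *: m2 d (-b) (-c) a).
rewrite -scalemxAr mulm2 scalem2 scalarm2.
congr (m2 _ _ _ _); field; exact: Hd.
Qed.

Definition cj (Q M : 'M[R]_2) := Q *m M *m Q^T.

Lemma cj_unit Q M X : cj Q M = X -> X \in unitmx -> Q \in unitmx.
Proof.
move=> HX HU.
have [] // := @mulmx1_unit _ _ Q (M *m Q^T *m invmx X).
by rewrite !mulmxA -/(cj Q M) HX mulmxV.
Qed.

End M2.


Section Key.
Variable R : realType.
Variables (H : tensor R) (A B C : 'M[R]_2).
Hypothesis Hfl : hflat H = block_mx A C C B.

Definition Fm (P : 'M[R]_2) (i j : 'I_2) : 'M[R]_2 :=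
  (P i i0 * P j i0) *: A + (P i i0 * P j i1 + P i i1 * P j i0) *: C + (P i i1 * P j i1) *: B.

Lemma inord_lo (j : 'I_2) : (inord (lshift 2 j %/ 2) : 'I_2) = i0 /\ (inord (lshift 2 j %% 2) : 'I_2) = j.
Proof.
split; apply: val_inj => /=; case: (ord2P j) => -> /=; by rewrite inordK.
Qed.

Lemma inord_hi (j : 'I_2) : (inord (rshift 2 j %/ 2) : 'I_2) = i1 /\ (inord (rshift 2 j %% 2) : 'I_2) = j.
Proof.
split; apply: val_inj => /=; case: (ord2P j) => -> /=; by rewrite inordK.
Qed.

Lemma HA j l : H i0 j i0 l = A j l.
Proof.
have : hflat H (lshift 2 j) (lshift 2 l) = block_mx A C C B (lshift 2 j) (lshift 2 l) by rewrite Hfl.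
rewrite block_mxEul mxE.
by case: (inord_lo j) => -> ->; case: (inord_lo l) => -> ->.
Qed.
Lemma HC1 j l : H i0 j i1 l = C j l.
Proof.
have : hflat H (lshift 2 j) (rshift 2 l) = block_mx A C C B (lshift 2 j) (rshift 2 l) by rewrite Hfl.
rewrite block_mxEur mxE.
by case: (inord_lo j) => -> ->; case: (inord_hi l) => -> ->.
Qed.
Lemma HC2 j l : H i1 j i0 l = C j l.
Proof.
have : hflat H (rshift 2 j) (lshift 2 l) = block_mx A C C B (rshift 2 j) (lshift 2 l) by rewrite Hfl.
rewrite block_mxEdl mxE.
by case: (inord_hi j) => -> ->; case: (inord_lo l) => -> ->.
Qed.
Lemma HB j l : H i1 j i1 l = B j l.
Proof.
have : hflat H (rshift 2 j) (rshift 2 l) = block_mx A C C B (rshift 2 j) (rshift 2 l) by rewrite Hfl.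
rewrite block_mxEdr mxE.
by case: (inord_hi j) => -> ->; case: (inord_hi l) => -> ->.
Qed.

Lemma cong_entry P Q a b c d :
  cong P Q H a b c d = (cj Q (Fm P a c)) b d.
Proof.
rewrite /cong /mlprod /cj /Fm.
rewrite !sum2 !HA !HB !HC1 !HC2.
rewrite !mxE !sum2 !mxE !sum2 !mxE.
ring.
Qed.

Lemma key P Q : hflat (cong P Q H) =
  block_mx (cj Q (Fm P i0 i0)) (cj Q (Fm P i0 i1)) (cj Q (Fm P i1 i0)) (cj Q (Fm P i1 i1)).
Proof.
apply/matrixP => p q.
case: (@splitP 2 2 p) => j Hj; case: (@splitP 2 2 q) => l Hl.
- have -> : p = lshift 2 j by apply: val_inj.
  have -> : q = lshift 2 l by apply: val_inj.
  rewrite (@block_mxEul _ 2 2 2 2) mxE cong_entry.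
  by case: (inord_lo j) => -> ->; case: (inord_lo l) => -> ->.
- have -> : p = lshift 2 j by apply: val_inj.
  have -> : q = rshift 2 l by apply: val_inj.
  rewrite (@block_mxEur _ 2 2 2 2) mxE cong_entry.
  by case: (inord_lo j) => -> ->; case: (inord_hi l) => -> ->.
- have -> : p = rshift 2 j by apply: val_inj.
  have -> : q = lshift 2 l by apply: val_inj.
  rewrite (@block_mxEdl _ 2 2 2 2) mxE cong_entry.
  by case: (inord_hi j) => -> ->; case: (inord_lo l) => -> ->.
- have -> : p = rshift 2 j by apply: val_inj.
  have -> : q = rshift 2 l by apply: val_inj.
  rewrite (@block_mxEdr _ 2 2 2 2) mxE cong_entry.
  by case: (inord_hi j) => -> ->; case: (inord_hi l) => -> ->.
Qed.
End Key.


Section S.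
Variable R : realType.

Lemma sqrt_sq (x : R) : 0 <= x -> Num.sqrt x * Num.sqrt x = x.
Proof. by move=> h; rewrite -expr2 sqr_sqrtr. Qed.

Lemma cjmul (Q1 Q2 M : 'M[R]_2) : cj (Q2 *m Q1) M = cj Q2 (cj Q1 M).
Proof. by rewrite /cj trmx_mul !mulmxA. Qed.

Lemma cj1 (M : 'M[R]_2) : cj 1%:M M = M.
Proof. by rewrite /cj trmx1 mul1mx mulmx1. Qed.

Lemma cjD (Q M N : 'M[R]_2) : cj Q (M + N) = cj Q M + cj Q N.
Proof. by rewrite /cj mulmxDr mulmxDl. Qed.

Lemma cjZ (Q M : 'M[R]_2) t : cj Q (t *: M) = t *: cj Q M.
Proof. by rewrite /cj -scalemxAr -scalemxAl. Qed.

Lemma cjm2 q0 q1 q2 q3 (a b c d : R) : cj (m2 q0 q1 q2 q3) (m2 a b c d) =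
  m2 ((q0*a+q1*c)*q0 + (q0*b+q1*d)*q1) ((q0*a+q1*c)*q2 + (q0*b+q1*d)*q3)
     ((q2*a+q3*c)*q0 + (q2*b+q3*d)*q1) ((q2*a+q3*c)*q2 + (q2*b+q3*d)*q3).
Proof. by rewrite /cj trm2 !mulm2. Qed.

Lemma cj_sym Q (a b c : R) : exists x y z, cj Q (m2 a b b c) = m2 x y y z.
Proof.
rewrite (m2E Q) cjm2; do 3 eexists; congr (m2 _ _ _ _); ring.
Qed.

Lemma rotL (al be ga : R) : exists Rm, Rm \in unitmx /\ cj Rm 1%:M = 1%:M /\
   is_diag_mx (cj Rm (m2 al be be ga)).
Proof.
have [->|bnz] := eqVneq be 0.
  exists 1%:M; split; first exact: unitmx1.
  by rewrite !cj1 diagm2 eqxx.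
pose r := Num.sqrt ((al-ga)*(al-ga) + 4*be*be).
have hr : r * r = (al-ga)*(al-ga) + 4*be*be by apply: sqrt_sq; have := sqr_ge0 (al-ga); have := sqr_ge0 be; rewrite !expr2; lra.
pose la := (al+ga+r)/2.
have hla : la*la - (al+ga)*la + al*ga - be*be = 0 by rewrite /la; lra.
pose k := be*be + (la-al)*(la-al).
have kpos : 0 < k.
  rewrite /k; have : 0 < be * be by rewrite -expr2 exprn_even_gt0 //.
  have := sqr_ge0 (la-al); rewrite !expr2; lra.
pose n := Num.sqrt k.
have hn : n * n = k by apply: sqrt_sq; lra.
have nnz : n != 0 by rewrite gt_eqF // sqrtr_gt0.
pose ni := n^-1.
have hni : ni * ni * k = 1.
  by rewrite -hn /ni; field.
have HR : cj (m2 (be*ni) ((la-al)*ni) ((al-la)*ni) (be*ni)) 1%:M = 1%:M.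
  rewrite scalarm2 cjm2; congr (m2 _ _ _ _); rewrite /k in hni; lra.
exists (m2 (be*ni) ((la-al)*ni) ((al-la)*ni) (be*ni)); split.
  apply: cj_unit HR _; exact: unitmx1.
split => //.
rewrite cjm2 diagm2; have h2 := congr1 (fun x => be*ni*ni*x) hla; simpl in h2.
rewrite mulr0 in h2.
by apply/andP; split; apply/eqP; lra.
Qed.
End S.


Section S.
Variable R : realType.

Lemma sqrt_pos (x : R) : 0 < x -> exists s, 0 < s /\ x = s * s.
Proof.
move=> h; exists (Num.sqrt x); split; first by rewrite sqrtr_gt0.
by rewrite sqrt_sq // ltW.
Qed.

Lemma def_case (a b c n0 n1 n2 : R) : 0 < a -> 0 < a * c - b * b ->
  exists Q, [/\ Q \in unitmx, cj Q (m2 a b b c) = 1%:M & is_diag_mx (cj Q (m2 n0 n1 n1 n2))].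
Proof.
move=> ha hd.
have [sa [sapos Ea]] := sqrt_pos ha.
have sanz : sa != 0 by rewrite gt_eqF.
have he : 0 < c - b * b / (sa * sa).
  have -> : c - b * b / (sa * sa) = (a * c - b * b) / a by rewrite Ea; field.
  exact: divr_gt0.
have [se [sepos Ee]] := sqrt_pos he.
have senz : se != 0 by rewrite gt_eqF.
have hc : c = se * se + b * b / (sa * sa) by rewrite -Ee; ring.
pose Q1 := m2 (sa^-1) 0 (- b / (sa * sa * se)) (se^-1).
have HQ1 : cj Q1 (m2 a b b c) = 1%:M.
  rewrite /Q1 hc Ea scalarm2 cjm2; congr (m2 _ _ _ _); field; rewrite ?sanz ?senz //.
have [x [y [z Hs]]] := cj_sym Q1 n0 n1 n2.
have [Rm [RU [R1 RD]]] := rotL x y z.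
exists (Rm *m Q1); split.
- apply: (cj_unit (M := m2 a b b c)); last exact: unitmx1.
  by rewrite cjmul HQ1 R1.
- by rewrite cjmul HQ1 R1.
- by rewrite cjmul Hs.
Qed.

End S.


Section S.
Variable R : realType.

Lemma cj_offdiag_kill (Q N M : 'M[R]_2) (n0 n1 n2 : R) :
  cj Q M = m2 0 1 1 0 -> N = m2 n0 n1 n1 n2 ->
  exists t, is_diag_mx (cj Q (N + t *: M)).
Proof.
move=> HM ->.
have [x [y [z Hs]]] := cj_sym Q n0 n1 n2.
exists (- y); rewrite cjD cjZ HM Hs scalem2 addm2 diagm2.
by apply/andP; split; apply/eqP; ring.
Qed.

Lemma indef_case (a b c n0 n1 n2 : R) : a * c - b * b < 0 ->
  exists t Q, [/\ Q \in unitmx, cj Q (m2 a b b c) = m2 0 1 1 0 &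
     is_diag_mx (cj Q (m2 n0 n1 n1 n2 + t *: m2 a b b c))].
Proof.
move=> hd.
suff [Q HQ1] : exists Q, cj Q (m2 a b b c) = m2 0 1 1 0.
  have [t Ht] := cj_offdiag_kill HQ1 (erefl (m2 n0 n1 n1 n2)).
  exists t, Q; split => //.
  apply: cj_unit HQ1 _; apply: m2_unit.
  by rewrite !mul0r !mulr1 sub0r oppr_eq0 oner_eq0.
have [a0|anz] := eqVneq a 0.
  subst a.
  have bnz : b != 0 by apply/eqP => hb; move: hd; rewrite hb => hd; lra.
  exists (m2 1 0 (-c/(2*b*b)) (b^-1)); rewrite cjm2; congr (m2 _ _ _ _); field; by rewrite ?bnz.
have hk : 0 < b * b - a * c by lra.
have [sk [skpos Ek]] := sqrt_pos hk.
have sknz : sk != 0 by rewrite gt_eqF.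
have hc : c = (b * b - sk * sk) / a by rewrite -Ek; field.
exists (m2 (-b+sk) a ((b+sk)/(2*a*sk*sk)) (-a/(2*a*sk*sk))).
rewrite hc cjm2; congr (m2 _ _ _ _); field; by rewrite ?anz ?sknz ?mulf_neq0.
Qed.

Lemma sign_exists (a : R) : a != 0 -> exists s, (s = 1 \/ s = -1) /\ 0 < s * a.
Proof.
move=> anz; have [ha|ha] := ltrP 0 a.
  by exists 1; split; [left|rewrite mul1r].
exists (-1); split; first by right.
rewrite mulN1r oppr_gt0 lt_neqAle anz ha //.
Qed.

Lemma rank1_stage1 (a b c : R) : a * c - b * b = 0 -> ~ (a = 0 /\ b = 0 /\ c = 0) ->
  exists Q s, [/\ Q \in unitmx, s = 1 \/ s = -1 & cj Q (m2 a b b c) = m2 s 0 0 0].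
Proof.
move=> hd nz.
have [a0|anz] := eqVneq a 0.
  subst a.
  have hb : b = 0.
    have : b * b == 0 by apply/eqP; lra.
    by rewrite mulf_eq0 orbb => /eqP.
  subst b.
  have cnz : c != 0 by apply/eqP => hc; apply: nz.
  have [s [hs hsc]] := sign_exists cnz.
  have [sc [scpos Ec]] := sqrt_pos hsc.
  have scnz : sc != 0 by rewrite gt_eqF.
  have hc : c = s * sc * sc by case: hs Ec => -> E; lra.
  exists (m2 0 (sc^-1) 1 0), s; split => //.
    by apply: m2_unit; rewrite !mul0r mulr1 sub0r oppr_eq0 invr_eq0.
  rewrite hc cjm2; congr (m2 _ _ _ _); case: hs => ->; field; by rewrite ?scnz.
have [s [hs hsa]] := sign_exists anz.
have [sa [sapos Ea]] := sqrt_pos hsa.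
have sanz : sa != 0 by rewrite gt_eqF.
have hc : c = b * b / a by apply: (mulfI anz); rewrite mulrCA divff // mulr1; lra.
have ha : a = s * sa * sa by case: hs Ea => -> E; lra.
exists (m2 (sa^-1) 0 (-b/a) 1), s; split => //.
  by apply: m2_unit; rewrite !mul0r mulr1 subr0 invr_eq0.
rewrite hc ha cjm2; congr (m2 _ _ _ _); case: hs => ->; field; by rewrite ?sanz ?anz.
Qed.

Lemma umat_e1 (s : R) : s%:M - s *: (c2 0 1 *m (c2 0 1)^T) = m2 s 0 0 0.
Proof.
rewrite scalarm2 c2c2 scalem2 oppm2 addm2; congr (m2 _ _ _ _); ring.
Qed.

Lemma rank1_stage2 (s al be ga : R) : s = 1 \/ s = -1 ->
  exists t Q (u : 'cV[R]_2), [/\ Q \in unitmx, cj Q (m2 s 0 0 0) = s%:M - s *: (u *m u^T) &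
     is_diag_mx (cj Q (m2 al be be ga + t *: m2 s 0 0 0))].
Proof.
move=> hs.
have [g0|gnz] := eqVneq ga 0; last first.
  exists 0, (m2 1 (-be/ga) 0 1), (c2 0 1); split.
  - by apply: m2_unit; rewrite !mulr1 mulr0 subr0 oner_eq0.
  - by rewrite umat_e1 cjm2; congr (m2 _ _ _ _); ring.
  - rewrite scale0r addr0 cjm2 diagm2; apply/andP; split; apply/eqP; field; by rewrite ?gnz.
subst ga.
have [b0|bnz] := eqVneq be 0.
  subst be; exists 0, 1%:M, (c2 0 1); split.
  - exact: unitmx1.
  - by rewrite umat_e1 cj1.
  - by rewrite scale0r addr0 cj1 diagm2 eqxx.
have hp : 0 < 1 + be * be by have := sqr_ge0 be; rewrite expr2; lra.
have [rho [rpos Er]] := sqrt_pos hp.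
have rnz : rho != 0 by rewrite gt_eqF.
pose ri := rho^-1.
have hri : ri * ri * (1 + be * be) = 1 by rewrite Er /ri; field.
exists (s * (1 - al)), (m2 ri 0 (be * ri) (- ri)), (c2 (- be * ri) ri); split.
- by apply: m2_unit; rewrite mul0r subr0 mulrN oppr_eq0 mulf_neq0 // invr_eq0.
- rewrite scalarm2 c2c2 scalem2 oppm2 addm2 cjm2; congr (m2 _ _ _ _); case: hs => ->; lra.
- rewrite scalem2 addm2 cjm2 diagm2; apply/andP; split; apply/eqP; case: hs => ->; ring.
Qed.

Lemma rank1_case (a b c n0 n1 n2 : R) : a * c - b * b = 0 -> ~ (a = 0 /\ b = 0 /\ c = 0) ->
  exists t Q s (u : 'cV[R]_2), [/\ Q \in unitmx, s = 1 \/ s = -1,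
     cj Q (m2 a b b c) = s%:M - s *: (u *m u^T) &
     is_diag_mx (cj Q (m2 n0 n1 n1 n2 + t *: m2 a b b c))].
Proof.
move=> hd nz.
have [Q1 [s [U1 hs H1]]] := rank1_stage1 hd nz.
have [x [y [z Hs]]] := cj_sym Q1 n0 n1 n2.
have [t [Q2 [u [U2 H2 H3]]]] := rank1_stage2 x y z hs.
exists t, (Q2 *m Q1), s, u; split => //.
- by rewrite unitmx_mul U1 U2.
- by rewrite cjmul H1.
- by rewrite cjmul cjD cjZ H1 Hs.
Qed.

End S.


Section S.
Variable R : realType.

Lemma sym_m2 (M : 'M[R]_2) : is_sym2 M -> exists a b c, M = m2 a b b c.
Proof.
move=> hs; exists (M i0 i0), (M i0 i1), (M i1 i1).
have e : M i1 i0 = M i0 i1 by rewrite -{1}hs mxE.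
by rewrite {1}(m2E M) e.
Qed.

Lemma qf x y (a b c d : R) :
  ((c2 x y)^T *m m2 a b c d *m c2 x y) 0 0 = x * (a * x + b * y) + y * (c * x + d * y).
Proof.
rewrite !mxE sum2 !mxE !sum2 !mxE /=; ring.
Qed.

Lemma c2_0 : c2 0 0 = 0 :> 'cV[R]_2.
Proof. apply/matrixP => i j; rewrite !mxE; by case: (ord2P i) => ->. Qed.

Lemma c2_neq0 (x y : R) : (x != 0) || (y != 0) -> c2 x y != 0.
Proof.
move=> h; apply/eqP => e; move: h.
have e0 := congr1 (fun v : 'cV[R]_2 => v i0 0) e.
have e1 := congr1 (fun v : 'cV[R]_2 => v i1 0) e.
by move: e0 e1; rewrite /= !mxE /= => -> ->; rewrite eqxx.
Qed.

Lemma posdef_m2 (a b c : R) : posdef (m2 a b b c) -> 0 < a /\ 0 < a * c - b * b.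
Proof.
move=> [_ hp].
have nz1 : c2 (1:R) 0 != 0 by apply: c2_neq0; rewrite oner_neq0.
have h1 := hp _ nz1; rewrite qf in h1.
have ha : 0 < a by lra.
have ha' : a != 0 by rewrite gt_eqF.
have nz2 : c2 (-b) a != 0 by apply: c2_neq0; rewrite ha' orbT.
have h2 := hp _ nz2; rewrite qf in h2.
split => //.
have : 0 < a * (a * c - b * b) by nra.
by rewrite pmulr_rgt0.
Qed.

Lemma det_pos_def (a b c : R) : 0 < a * c - b * b ->
  posdef (m2 a b b c) \/ negdef (m2 a b b c).
Proof.
move=> hd.
suff H : forall a' b' c' : R, 0 < a' -> 0 < a' * c' - b' * b' -> posdef (m2 a' b' b' c').
  have [ha|ha] := ltrP 0 a; first by left; apply: H.
  have ha' : a < 0.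
    rewrite lt_neqAle ha andbT; apply/eqP => a0; move: hd; rewrite a0 => hd; have := sqr_ge0 b; rewrite expr2; lra.
  right; rewrite /negdef oppm2; apply: H; lra.
move=> a' b' c' ha hd'; split; first by rewrite /is_sym2 trm2.
move=> x; rewrite (c2E x) qf.
set x0 := x i0 0; set x1 := x i1 0 => hx.
have [x10|x1nz] := eqVneq x1 0.
  have x0nz : x0 != 0.
    apply/eqP => x00; move: hx; rewrite x00 x10 c2_0 eqxx //.
  have : 0 < x0 * x0 by rewrite -expr2 exprn_even_gt0.
  rewrite x10; nra.
have : 0 < x1 * x1 by rewrite -expr2 exprn_even_gt0.
move=> h.
have h3 : 0 < a' * (x0 * (a' * x0 + b' * x1) + x1 * (b' * x0 + c' * x1)).
  have := sqr_ge0 (a' * x0 + b' * x1); rewrite expr2 => h4.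
  have : 0 < (a' * c' - b' * b') * (x1 * x1) by apply: mulr_gt0.
  nra.
by move: h3; rewrite pmulr_rgt0.
Qed.

Lemma def_gen (M : 'M[R]_2) n0 n1 n2 : is_sym2 M -> posdef M \/ negdef M ->
  exists Q s, [/\ Q \in unitmx, s = 1 \/ s = -1, cj Q M = s%:M &
     is_diag_mx (cj Q (m2 n0 n1 n1 n2))].
Proof.
move=> /sym_m2 [a [b [c ->]]] [hp|hn].
  have [ha hd] := posdef_m2 hp.
  have [Q [U H1 H2]] := def_case n0 n1 n2 ha hd.
  by exists Q, 1; split => //; left.
move: hn; rewrite /negdef oppm2 => /posdef_m2 [ha hd].
have hd' : 0 < - a * - c - - b * - b by lra.
have [Q [U H1 H2]] := def_case n0 n1 n2 ha hd'.
exists Q, (-1); split => //; first by right.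
have : cj Q (- m2 a b b c) = 1%:M by rewrite oppm2.
rewrite /cj mulmxN mulNmx => /eqP; rewrite eqr_oppLR => /eqP ->.
by rewrite !scalarm2 oppm2 oppr0.
Qed.

Lemma nondef_gen (a b c n0 n1 n2 : R) : ~ (posdef (m2 a b b c) \/ negdef (m2 a b b c)) ->
  m2 a b b c != 0 ->
  exists t Q s (u : 'cV[R]_2), [/\ Q \in unitmx, s = 1 \/ s = -1,
     cj Q (m2 a b b c) = s%:M - s *: (u *m u^T) &
     is_diag_mx (cj Q (m2 n0 n1 n1 n2 + t *: m2 a b b c))].
Proof.
move=> nd nz.
have hd : a * c - b * b <= 0 by rewrite leNgt; apply/negP => h; apply: nd; exact: det_pos_def.
have [hlt|heq] : a * c - b * b < 0 \/ a * c - b * b = 0.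
  by move: hd; rewrite le_eqVlt => /orP [/eqP ->|->]; [right|left].
  have [t [Q [U H1 H2]]] := indef_case n0 n1 n2 hlt.
  exists t, Q, 1, (c2 1 (-1)); split => //; first by left.
  rewrite H1 scalarm2 c2c2 scale1r oppm2 addm2; congr (m2 _ _ _ _); ring.
apply: rank1_case => //.
move=> [a0 [b0 c0]]; move: nz; by rewrite a0 b0 c0 -zerom2 eqxx.
Qed.

End S.


Section S.
Variable R : realType.

Lemma FmE (A B C : 'M[R]_2) p0 p1 p2 p3 :
  let P := m2 p0 p1 p2 p3 in
  [/\ Fm A B C P i0 i0 = (p0 * p0) *: A + (p0 * p1 + p1 * p0) *: C + (p1 * p1) *: B,
      Fm A B C P i0 i1 = (p0 * p2) *: A + (p0 * p3 + p1 * p2) *: C + (p1 * p3) *: B &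
      Fm A B C P i1 i1 = (p2 * p2) *: A + (p2 * p3 + p3 * p2) *: C + (p3 * p3) *: B].
Proof. by rewrite /Fm !mxE /=. Qed.

Lemma cj_tr (Q M : 'M[R]_2) : (cj Q M)^T = cj Q M^T.
Proof. by rewrite /cj !trmx_mul trmxK mulmxA. Qed.

Lemma finish (H : tensor R) (A B C : 'M[R]_2) :
  is_sym2 A -> is_sym2 B -> is_sym2 C -> hflat H = block_mx A C C B ->
  forall P Q s (u : 'cV[R]_2),
  s = 0 \/ s = 1 \/ s = -1 ->
  cj Q (Fm A B C P i0 i0) = s%:M - s *: (u *m u^T) ->
  is_diag_mx (cj Q (Fm A B C P i0 i1)) ->
  (s = 0 -> cj Q (Fm A B C P i1 i1) = 0) ->
  exists D Bt, [/\ is_diag_mx D, is_sym2 Bt &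
        hflat (cong P Q H) =
          block_mx (s%:M) D D (s *: Bt) - s *: block_mx (u *m u^T) 0 0 0].
Proof.
move=> sA sB sC Hfl P Q s u hs H00 H01 H11.
exists (cj Q (Fm A B C P i0 i1)), (s *: cj Q (Fm A B C P i1 i1)); split => //.
  rewrite /is_sym2 linearZ /= cj_tr; congr (_ *: cj Q _).
  by rewrite /Fm !linearD !linearZ /= sA sB sC.
rewrite (key Hfl) scale_block_mx opp_block_mx add_block_mx !scaler0 !oppr0 !addr0.
have -> : Fm A B C P i1 i0 = Fm A B C P i0 i1.
  by rewrite /Fm; congr (_ *: _ + _ *: _ + _ *: _); ring.
have -> : s *: (s *: cj Q (Fm A B C P i1 i1)) = cj Q (Fm A B C P i1 i1).
  rewrite scalerA.
  case: hs => [s0|[->|->]]; last 2 first.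
  - by rewrite mulr1 scale1r.
  - by rewrite mulrNN mulr1 scale1r.
  by rewrite s0 mulr0 scale0r H11.
by rewrite H00.
Qed.

End S.


Lemma pm1_neq0 (R : realType) (s : R) : s = 1 \/ s = -1 -> s != 0.
Proof. by case=> ->; rewrite ?oppr_eq0 oner_eq0. Qed.
Arguments pm1_neq0 {R s}.

Unset Implicit Arguments.

Theorem proposition4p2 (R : realType) (H : tensor R) (A B C : 'M[R]_2) :
  R_hermitian_decomposable H ->
  is_sym2 A -> is_sym2 B -> is_sym2 C ->
  hflat H = block_mx A C C B ->
  exists (P Q : 'M[R]_2) (s : R) (D : 'M[R]_2) (u : 'cV[R]_2) (Bt : 'M[R]_2),
    [/\ P \in unitmx, Q \in unitmx & s = 0 \/ s = 1 \/ s = -1] /\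
    [/\ is_diag_mx D, is_sym2 Bt &
        hflat (cong P Q H) =
          block_mx (s%:M) D D (s *: Bt) - s *: block_mx (u *m u^T) 0 0 0] /\
    (posdef A \/ negdef A \/ posdef B \/ negdef B -> u = 0) /\
    (A = 0 /\ B = 0 -> s = 0).
Proof.
move=> _ sA sB sC Hfl.
have [a0 [a1 [a2 EA]]] := sym_m2 sA.
have [b0 [b1 [b2 EB]]] := sym_m2 sB.
have [k0 [k1 [k2 EC]]] := sym_m2 sC.
have fin := finish sA sB sC Hfl.
have [/andP [/eqP A0 /eqP B0] | nAB] := boolP ((A == 0) && (B == 0)).
  have [Rm [RU [_ RD]]] := rotL k0 k1 k2.
  have [F00 F01 F11] := FmE A B C 1 0 0 1.
  have E00 : Fm A B C (m2 1 0 0 1) i0 i0 = 0.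
    by rewrite F00 A0 B0 EC zerom2 !scalem2 !addm2; congr (m2 _ _ _ _); ring.
  have E01 : Fm A B C (m2 1 0 0 1) i0 i1 = C.
    by rewrite F01 EA EB EC !scalem2 !addm2; congr (m2 _ _ _ _); ring.
  have E11 : Fm A B C (m2 1 0 0 1) i1 i1 = 0.
    by rewrite F11 A0 B0 EC zerom2 !scalem2 !addm2; congr (m2 _ _ _ _); ring.
  have [D [Bt [HD HBt Hh]]] := fin (m2 1 0 0 1) Rm 0 (c2 0 0) (or_introl erefl)
    ltac:(by rewrite E00 /cj mulmx0 mul0mx scale0r subr0 scalarm2 -zerom2)
    ltac:(by rewrite E01 EC)
    ltac:(by rewrite E11 /cj mulmx0 mul0mx).
  exists (m2 1 0 0 1), Rm, 0, D, (c2 0 0), Bt; split; last split => //.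
    by split => //; [apply: m2_unit; rewrite !mulr1 mulr0 subr0 oner_eq0 | left].
  by split => //; move=> _; rewrite c2_0.
have nAB' : ~ (A = 0 /\ B = 0) by move=> [A0 B0]; move: nAB; rewrite A0 B0 !eqxx.
have [dA|ndA] := classic (posdef A \/ negdef A).
  have [Q [s [QU hs HQA HQC]]] := def_gen k0 k1 k2 sA dA.
  rewrite -EC in HQC.
  have [F00 F01 F11] := FmE A B C 1 0 0 1.
  have E00 : Fm A B C (m2 1 0 0 1) i0 i0 = A.
    by rewrite F00 EA EB EC !scalem2 !addm2; congr (m2 _ _ _ _); ring.
  have E01 : Fm A B C (m2 1 0 0 1) i0 i1 = C.
    by rewrite F01 EA EB EC !scalem2 !addm2; congr (m2 _ _ _ _); ring.
  have [D [Bt [HD HBt Hh]]] := fin (m2 1 0 0 1) Q s (c2 0 0) (or_intror hs)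
    ltac:(by rewrite E00 HQA c2_0 mul0mx scaler0 subr0)
    ltac:(by rewrite E01)
    ltac:(by move=> s0; move: (pm1_neq0 hs); rewrite s0 eqxx).
  exists (m2 1 0 0 1), Q, s, D, (c2 0 0), Bt; split; last split => //.
    by split => //; [apply: m2_unit; rewrite !mulr1 mulr0 subr0 oner_eq0 | right].
  by split => //; move=> _; rewrite c2_0.
have [dB|ndB] := classic (posdef B \/ negdef B).
  have [Q [s [QU hs HQB HQC]]] := def_gen k0 k1 k2 sB dB.
  rewrite -EC in HQC.
  have [F00 F01 F11] := FmE A B C 0 1 1 0.
  have E00 : Fm A B C (m2 0 1 1 0) i0 i0 = B.
    by rewrite F00 EA EB EC !scalem2 !addm2; congr (m2 _ _ _ _); ring.
  have E01 : Fm A B C (m2 0 1 1 0) i0 i1 = C.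
    by rewrite F01 EA EB EC !scalem2 !addm2; congr (m2 _ _ _ _); ring.
  have [D [Bt [HD HBt Hh]]] := fin (m2 0 1 1 0) Q s (c2 0 0) (or_intror hs)
    ltac:(by rewrite E00 HQB c2_0 mul0mx scaler0 subr0)
    ltac:(by rewrite E01)
    ltac:(by move=> s0; move: (pm1_neq0 hs); rewrite s0 eqxx).
  exists (m2 0 1 1 0), Q, s, D, (c2 0 0), Bt; split; last split => //.
    split => //; last by right.
    by apply: m2_unit; rewrite !mul0r mulr1 sub0r oppr_eq0 oner_eq0.
  by split => //; move=> _; rewrite c2_0.
have nodef : ~ (posdef A \/ negdef A \/ posdef B \/ negdef B).
  by move=> [h|[h|[h|h]]]; [apply: ndA; left|apply: ndA; right|apply: ndB; left|apply: ndB; right].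
have [A0|Anz] := eqVneq A 0.
  have Bnz : B != 0 by apply/eqP => B0; apply: nAB'.
  rewrite EB in ndB Bnz.
  have [t [Q [s [u [QU hs HQB HQC]]]]] := nondef_gen k0 k1 k2 ndB Bnz.
  rewrite -EC -EB in HQC HQB.
  have [F00 F01 F11] := FmE A B C 0 1 1 t.
  have E00 : Fm A B C (m2 0 1 1 t) i0 i0 = B.
    by rewrite F00 A0 EB EC zerom2 !scalem2 !addm2; congr (m2 _ _ _ _); ring.
  have E01 : Fm A B C (m2 0 1 1 t) i0 i1 = C + t *: B.
    by rewrite F01 A0 EB EC zerom2 !scalem2 !addm2; congr (m2 _ _ _ _); ring.
  have [D [Bt [HD HBt Hh]]] := fin (m2 0 1 1 t) Q s u (or_intror hs)
    ltac:(by rewrite E00 HQB)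
    ltac:(by rewrite E01)
    ltac:(by move=> s0; move: (pm1_neq0 hs); rewrite s0 eqxx).
  exists (m2 0 1 1 t), Q, s, D, u, Bt; split; last split => //.
    split => //; last by right.
    by apply: m2_unit; rewrite !mul0r mulr1 sub0r oppr_eq0 oner_eq0.
rewrite EA in ndA Anz.
have [t [Q [s [u [QU hs HQA HQC]]]]] := nondef_gen k0 k1 k2 ndA Anz.
rewrite -EC -EA in HQC HQA.
have [F00 F01 F11] := FmE A B C 1 0 t 1.
have E00 : Fm A B C (m2 1 0 t 1) i0 i0 = A.
  by rewrite F00 EA EB EC !scalem2 !addm2; congr (m2 _ _ _ _); ring.
have E01 : Fm A B C (m2 1 0 t 1) i0 i1 = C + t *: A.
  by rewrite F01 EA EB EC !scalem2 !addm2; congr (m2 _ _ _ _); ring.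
have [D [Bt [HD HBt Hh]]] := fin (m2 1 0 t 1) Q s u (or_intror hs)
  ltac:(by rewrite E00 HQA)
  ltac:(by rewrite E01)
  ltac:(by move=> s0; move: (pm1_neq0 hs); rewrite s0 eqxx).
exists (m2 1 0 t 1), Q, s, D, u, Bt; split; last split => //.
  split => //; last by right.
  by apply: m2_unit; rewrite !mulr1 mul0r subr0 oner_eq0.
Qed.
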